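(* Let $G$ be a planar PCC graph and let $\sigma$ be a face with $|\sigma|=N\ge 42$. Let $A_1,A_5,A_6$ be the sets of vertices $v$ on the boundary of $\sigma$ with face vector $f(v)=(3,3,3,N)$, $(3,5,N)$, $(3,6,N)$ respectively. Let $\mathcal T$ be the set of triangles $\tau$ whose vertex set is $\{v,v_1,v_2\}$ for some vertices with $v_1,v_2\in A_1\cup A_5\cup A_6$, and let $C_1$ be the set of vertices not on the boundary of $\sigma$ that lie on some triangle of $\mathcal T$. Then for every $v\in C_1$ there is a unique $\tau_v\in\mathcal T$ with $v$ a vertex of $\tau_v$; conversely, every $\tau\in\mathcal T$ has exactly one vertex belonging to $C_1$.
   Context: $G$ is a finite simple connected graph 2-cell embedded in the sphere; $|\sigma|$ is the length of the boundary walk of face $\sigma$; $F(v)$ is the multiset of faces incident to $v$ (one per corner) and the face vector $f(v)$ is the multiset of their sizes, written in nondecreasing order. $K(v)=1-\frac{\deg(v)}{2}+\sum_{\sigma\in F(v)}\frac1{|\sigma|}$. A prism (resp. antiprism) of order $N$ is the planar graph with $2N$ vertices, two $N$-faces and $N$ quadrilaterals (resp. $2N$ triangles), each vertex incident to two quadrilaterals and one $N$-face (resp. three triangles and one $N$-face). A planar PCC graph is such a $G$ with $K(v)>0$, $\deg(v)\ge3$ for all $v$, not a prism or antiprism. *)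

(* Defs.v *)
(* Planar maps are encoded as combinatorial maps
   (rotation systems): darts, a fixed-point-free involution [alpha]
   (the two half-edges of an edge), a permutation [sigma] (rotation of
   darts around their tail vertex). Vertices = sigma-orbits, edges =
   alpha-orbits, faces = orbits of phi := sigma \o alpha. *)
From HB Require Import structures.
From mathcomp Require Import all_boot all_order all_algebra.
Set Implicit Arguments. Unset Strict Implicit. Unset Printing Implicit Defensive.
Import Order.TTheory GRing.Theory Num.Theory.

Record rotmap := RotMap {
  dart : finType;
  alpha : dart -> dart;
  sigma : dart -> dart;
  alphaK : involutive alpha;
  alpha_nofix : forall x, alpha x != x;
  sigma_inj : injective sigma
}.

Section RotMapDefs.
Variable m : rotmap.
Notation D := (dart m).

Definition phi (x : D) : D := @sigma m (@alpha m x).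

Definition vertex_of (x : D) : D := froot (@sigma m) x.
Definition face_of (x : D) : D := froot phi x.
Definition vertices : {set D} := [set x | froots (@sigma m) x].
Definition faces : {set D} := [set x | froots phi x].

Definition deg (x : D) : nat := order (@sigma m) x.
Definition flen (x : D) : nat := order phi x.

(* the corners at the vertex of x are the darts of its sigma-orbit; the
   corner of dart d lies in the face (phi-orbit) of d *)
Definition face_vector (x : D) : seq nat :=
  sort leq [seq flen d | d <- orbit (@sigma m) x].

Definition curvature (x : D) : rat :=
  (1 - (deg x)%:R / 2 + \sum_(d <- orbit (@sigma m) x) ((flen d)%:R)^-1)%R.

Definition face_verts (f : D) : {set D} :=
  [set vertex_of d | d in [set d | fconnect phi f d]].

Definition num_edges : nat := #|D| %/ 2.

Definition map_connected : Prop :=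
  forall x y : D, connect [rel a b | (b == @sigma m a) || (b == @alpha m a)] x y.

Definition no_loops : Prop := forall x : D, ~~ fconnect (@sigma m) x (@alpha m x).
Definition no_multi_edges : Prop :=
  forall x y : D, fconnect (@sigma m) x y -> fconnect (@sigma m) (@alpha m x) (@alpha m y) -> x = y.

(* 2-cell embedded in the sphere: Euler characteristic 2 *)
Definition spherical : Prop :=
  (#|vertices| + #|faces| = num_edges + 2)%N.

Definition simple_spherical_map : Prop :=
  [/\ map_connected, no_loops, no_multi_edges & spherical].

Definition is_prism (N : nat) : Prop :=
  (3 <= N)%N /\ [/\ #|vertices| = (2 * N)%N,
      #|faces| = (N + 2)%N,
      #|[set f in faces | flen f == N]| = (if N == 4 then N + 2 else 2)%N,
      (forall f, f \in faces -> (flen f == 4) || (flen f == N))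
    & (forall v, face_vector v = sort leq [:: 4; 4; N])].

Definition is_antiprism (N : nat) : Prop :=
  (3 <= N)%N /\ [/\ #|vertices| = (2 * N)%N,
      #|faces| = (2 * N + 2)%N,
      #|[set f in faces | flen f == N]| = (if N == 3 then 2 * N + 2 else 2)%N,
      (forall f, f \in faces -> (flen f == 3) || (flen f == N))
    & (forall v, face_vector v = sort leq [:: 3; 3; 3; N])].

Definition planar_PCC : Prop :=
  [/\ simple_spherical_map,
      (forall v : D, (0 < curvature v)%R),
      (forall v : D, 3 <= deg v)%N,
      (forall N, ~ is_prism N)
    & (forall N, ~ is_antiprism N)].

Definition A156 (s : D) : {set D} :=
  [set v in face_verts s |
     (face_vector v == [:: 3; 3; 3; flen s]) ||
     (face_vector v == [:: 3; 5; flen s]) ||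
     (face_vector v == [:: 3; 6; flen s])].

Definition Tset (s : D) : {set D} :=
  [set t in faces | (flen t == 3) &&
     [exists v1 in A156 s, exists v2 in A156 s,
        [&& v1 != v2, v1 \in face_verts t & v2 \in face_verts t]]].

Definition C1 (s : D) : {set D} :=
  [set v in vertices | (v \notin face_verts s) &&
     [exists t in Tset s, v \in face_verts t]].

End RotMapDefs.

(* Main.v *)
Require Import Defs.
From HB Require Import structures.
From mathcomp Require Import all_boot all_order all_algebra.
From mathcomp Require Import ring lra.
Set Implicit Arguments. Unset Strict Implicit. Unset Printing Implicit Defensive.
Import Order.TTheory GRing.Theory Num.Theory.

Section Basics.
Variable m : rotmap.
Local Notation D := (dart m).
Local Notation sg := (@sigma m).
Local Notation al := (@alpha m).
Local Notation ph := (@phi m).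

Lemma al_inj : injective al.
Proof. exact: (can_inj (@alphaK _)). Qed.

Lemma ph_inj : injective ph.
Proof. by move=> x y; rewrite /phi => /sigma_inj /al_inj. Qed.

Lemma phA x : ph (al x) = sg x.
Proof. by rewrite /phi alphaK. Qed.

Lemma fconn_sym (f : D -> D) x y : injective f -> fconnect f x y = fconnect f y x.
Proof. by move=> fi; apply: fconnect_sym. Qed.

Lemma fconn_trans (f : D -> D) x y z : fconnect f x y -> fconnect f y z -> fconnect f x z.
Proof. exact: connect_trans. Qed.

Lemma fconn_f (f : D -> D) x y : injective f -> fconnect f x (f y) = fconnect f x y.
Proof. by move=> fi; rewrite -same_fconnect1_r. Qed.

Lemma fconn_fl (f : D -> D) x y : injective f -> fconnect f (f x) y = fconnect f x y.
Proof. by move=> fi; rewrite -same_fconnect1. Qed.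

Lemma order_conn (f : D -> D) x y : injective f -> fconnect f x y -> order f x = order f y.
Proof.
move=> fi xy; apply: eq_card => z; rewrite /in_mem /=.
apply/idP/idP => h; first by apply: connect_trans h; rewrite fconn_sym.
exact: connect_trans xy h.
Qed.

Lemma order1 (f : D -> D) x : f x = x -> (order f x <= 1)%N.
Proof.
move=> h; apply: (@order_le_cycle _ _ [:: x]); last by rewrite inE.
by rewrite /= h eqxx.
Qed.

Lemma order2 (f : D -> D) x : f (f x) = x -> (order f x <= 2)%N.
Proof.
move=> h; apply: (@order_le_cycle _ _ [:: x; f x]); last by rewrite inE eqxx.
by rewrite /= h !eqxx.
Qed.

Lemma orbit_conn (f : D -> D) x y : injective f -> fconnect f x y -> perm_eq (orbit f x) (orbit f y).
Proof.
move=> fi xy.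
have cy : fcycle f (orbit f x) by apply: cycle_orbit.
have yin : y \in orbit f x by rewrite -fconnect_orbit.
rewrite (orbitE cy (orbit_uniq f x) yin) perm_sym.
by rewrite perm_rot perm_refl.
Qed.

Lemma orbit4 (f : D -> D) x : order f x = 4 ->
  orbit f x = [:: x; f x; f (f x); f (f (f x))].
Proof. by rewrite /orbit => ->. Qed.

Lemma orbit3 (f : D -> D) x : order f x = 3 ->
  orbit f x = [:: x; f x; f (f x)].
Proof. by rewrite /orbit => ->. Qed.

Lemma iter4 (f : D -> D) x : injective f -> order f x = 4 -> f (f (f (f x))) = x.
Proof. by move=> fi h; have := iter_order fi x; rewrite h. Qed.

Lemma iter3 (f : D -> D) x : injective f -> order f x = 3 -> f (f (f x)) = x.
Proof. by move=> fi h; have := iter_order fi x; rewrite h. Qed.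

End Basics.
Section Main.
Variable m : rotmap.
Variable s : dart m.
Local Notation D := (dart m).
Local Notation sg := (@sigma m).
Local Notation al := (@alpha m).
Local Notation ph := (@phi m).
Hypothesis Hlp : no_loops m.
Hypothesis Hmu : no_multi_edges m.
Hypothesis Hdeg : forall x : D, (3 <= deg x)%N.
Hypothesis Hpos : forall x : D, (0 < curvature x)%R.
Hypothesis HN : (42 <= flen s)%N.

Local Notation V := (fconnect sg).
Local Notation S := (fconnect ph s).
Local Notation F := (fconnect ph).
Implicit Types x y z : D.

Lemma sg_inj : injective sg. Proof. exact: sigma_inj. Qed.
Hint Resolve sg_inj ph_inj al_inj : core.

Lemma Vsym x y : V x y = V y x. Proof. exact: fconn_sym. Qed.
Lemma Fsym x y : F x y = F y x. Proof. exact: fconn_sym. Qed.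
Lemma Vsg x y : V x (sg y) = V x y. Proof. exact: fconn_f. Qed.
Lemma Vsgl x y : V (sg x) y = V x y. Proof. exact: fconn_fl. Qed.
Lemma Fph x y : F x (ph y) = F x y. Proof. exact: fconn_f. Qed.
Lemma Fphl x y : F (ph x) y = F x y. Proof. exact: fconn_fl. Qed.
Lemma Vrefl x : V x x. Proof. exact: connect0. Qed.
Lemma Vtr x y z : V x y -> V y z -> V x z. Proof. exact: connect_trans. Qed.
Lemma Ftr x y z : F x y -> F y z -> F x z. Proof. exact: connect_trans. Qed.

Lemma nm x y : V x y -> V (al x) (al y) -> x = y.
Proof. exact: Hmu. Qed.

Lemma noloop x : ~~ V x (al x).
Proof. exact: Hlp. Qed.

Lemma sg1 x : sg x <> x.
Proof. by move=> h; have := Hdeg x; have := order1 h; rewrite /deg; case: (order _ _) => [|[|]]. Qed.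

Lemma sg2 x : sg (sg x) <> x.
Proof. by move=> h; have := Hdeg x; have := order2 h; rewrite /deg; case: (order _ _) => [|[|[|]]]. Qed.

Lemma Vph x : V (al x) (ph x).
Proof. by rewrite /phi Vsg Vrefl. Qed.

Lemma degV x y : V x y -> deg x = deg y.
Proof. exact: order_conn. Qed.

Lemma flenF x y : F x y -> flen x = flen y.
Proof. exact: order_conn. Qed.

Lemma flen_ph x : flen (ph x) = flen x.
Proof. by symmetry; apply: flenF; apply: fconnect1. Qed.

Lemma FA x : F (al x) (sg x).
Proof. by rewrite -phA; apply: fconnect1. Qed.

Lemma flenA x : flen (al x) = flen (sg x).
Proof. by rewrite -phA flen_ph. Qed.

Lemma Sph x : S (ph x) = S x. Proof. exact: Fph. Qed.

Lemma SA x : S (al x) = S (sg x).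
Proof. by rewrite -phA Sph. Qed.

Lemma flenS x : S x -> flen x = flen s.
Proof. by move=> h; symmetry; apply: flenF. Qed.

Lemma flen3 x : (3 <= flen x)%N.
Proof.
rewrite /flen.
have io := iter_order (@ph_inj m) x.
case e: (order ph x) io => [|[|[|n]]] //=.
- by have := order_gt0 ph x; rewrite e.
- move=> h. have : V x (al x) by rewrite Vsym -{2}h; exact: Vph.
  by rewrite (negbTE (noloop x)).
- move=> h. set y := ph x in h.
  have e1 : y = al x.
    apply: nm; first by rewrite Vsym /y Vph.
    by rewrite alphaK -h Vph.
  by exfalso; apply: (@sg1 (al x)); rewrite -[sg (al x)]/(ph x) -/y e1.
Qed.

Lemma deg_gt x : (3 <= deg x)%N. Proof. exact: Hdeg. Qed.

Lemma N42 : (42 <= flen s)%N. Proof. exact: HN. Qed.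

Local Open Scope ring_scope.

Lemma Kb x (L : seq D) : uniq L -> {subset L <= orbit sg x} ->
  0 < 1 - (deg x)%:R / 2 + \sum_(d <- L) ((flen d)%:R : rat)^-1
        + ((deg x)%:R - (size L)%:R) / 3.
Proof.
move=> uL sL.
have := Hpos x; rewrite /curvature.
rewrite (bigID (fun d => d \in L)) /=.
have e1 : \sum_(i <- orbit sg x | i \in L) ((flen i)%:R : rat)^-1 =
          \sum_(d <- L) ((flen d)%:R)^-1.
  rewrite -big_filter; apply: perm_big; apply: uniq_perm.
  - by rewrite filter_uniq // orbit_uniq.
  - exact: uL.
  - by move=> z; rewrite mem_filter; apply/andP/idP => [[]|h] //; split=> //; apply: sL.
have e2 : \sum_(i <- orbit sg x | i \notin L) ((flen i)%:R : rat)^-1 <=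
          \sum_(i <- orbit sg x | i \notin L) (1/3 : rat).
  apply: ler_sum => i _.
  have h3 := flen3 i.
  rewrite mul1r lef_pV2 ?posrE ?ltr0n //; last by apply: leq_trans h3.
  by rewrite (ler_nat _ 3).
have e3 : \sum_(i <- orbit sg x | i \notin L) (1/3 : rat) =
          ((deg x)%:R - (size L)%:R) / 3.
  rewrite big_const_seq iter_addr_0.
  have c1 : count (fun i => i \notin L) (orbit sg x) = (deg x - size L)%N.
    have := count_predC (fun i => i \in L) (orbit sg x).
    rewrite size_orbit -/(deg x).
    have -> : count (fun i => i \in L) (orbit sg x) = size L.
      rewrite -size_filter; apply: perm_size; apply: uniq_perm.
      - by rewrite filter_uniq // orbit_uniq.
      - exact: uL.
      - by move=> z; rewrite mem_filter; apply/andP/idP => [[]|h] //; split=> //; apply: sL.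
    move=> <-; rewrite addKn.
    by apply: eq_count => i.
  have sz : (size L <= deg x)%N.
    rewrite /deg -size_orbit; apply: uniq_leq_size => //.
  rewrite c1 (_ : (1/3 : rat) *+ (deg x - size L) = (deg x - size L)%:R * (1/3)); last by rewrite mulr_natl.
  by rewrite natrB //; field.
lra.
Qed.

Lemma invle (n k : nat) : (0 < k)%N -> (k <= n)%N -> (n%:R : rat)^-1 <= (k%:R)^-1.
Proof.
move=> k0 kn; rewrite lef_pV2 ?posrE ?ltr0n ?ler_nat //.
by apply: leq_trans kn.
Qed.

Lemma invpos (n : nat) : (0 < n)%N -> 0 < (n%:R : rat)^-1.
Proof. by move=> h; rewrite invr_gt0 ltr0n. Qed.

Lemma inv3 x : ((flen x)%:R : rat)^-1 <= 1/3.
Proof. by rewrite mul1r; apply: invle => //; apply: flen3. Qed.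

Lemma invN : ((flen s)%:R : rat)^-1 <= 1/42.
Proof. by rewrite mul1r; apply: invle. Qed.

Lemma invNp : 0 < ((flen s)%:R : rat)^-1.
Proof. by apply: invpos; apply: leq_trans HN. Qed.

Lemma degR x : 3 <= ((deg x)%:R : rat).
Proof. by rewrite (ler_nat _ 3); apply: Hdeg. Qed.

Lemma inS x : {subset [:: x] <= orbit sg x}.
Proof. by move=> z; rewrite inE => /eqP->; apply: in_orbit. Qed.

Lemma U1 x y : V x y -> S x -> S y -> x = y.
Proof.
move=> xy Sx Sy; apply/eqP; apply: contraT => nxy.
have := @Kb x [:: x; y].
rewrite /= inE nxy /= => /(_ isT).
have sub : {subset [:: x; y] <= orbit sg x}.
  by move=> z; rewrite !inE => /orP[]/eqP->; rewrite -fconnect_orbit ?Vrefl.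
move=> /(_ sub); rewrite !big_cons big_nil (flenS Sx) (flenS Sy).
have := invN; have := degR x.
set a := ((flen s)%:R : rat)^-1; set d := ((deg x)%:R : rat).
move=> *; exfalso; lra.
Qed.

Local Close Scope ring_scope.

Lemma pos4 x y : deg x = 4 -> V x y ->
  [\/ y = x, y = sg x, y = sg (sg x) | y = sg (sg (sg x))].
Proof.
move=> h; rewrite fconnect_orbit orbit4 // !inE.
by case/or4P => /eqP->; [apply: Or41|apply: Or42|apply: Or43|apply: Or44].
Qed.

Lemma pos3 x y : deg x = 3 -> V x y -> [\/ y = x, y = sg x | y = sg (sg x)].
Proof.
move=> h; rewrite fconnect_orbit orbit3 // !inE.
by case/or3P => /eqP->; [apply: Or31|apply: Or32|apply: Or33].
Qed.

Lemma sg4 x : deg x = 4 -> sg (sg (sg (sg x))) = x.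
Proof. exact: iter4. Qed.

Lemma sg3 x : deg x = 3 -> sg (sg (sg x)) = x.
Proof. exact: iter3. Qed.

Lemma tri x : flen x = 3 -> ph (ph (ph x)) = x.
Proof. exact: iter3. Qed.

Lemma Vs1 x : V x (sg x). Proof. exact: fconnect1. Qed.

Definition big (n : nat) := n = 5 \/ n = 6.

Definition Ast x := S x /\
  ((deg x = 4 /\ flen (sg x) = 3 /\ flen (sg (sg x)) = 3 /\ flen (sg (sg (sg x))) = 3) \/
   (deg x = 3 /\ ((flen (sg x) = 3 /\ big (flen (sg (sg x)))) \/ (big (flen (sg x)) /\ flen (sg (sg x)) = 3)))).

Definition IsA x := exists y, V x y /\ Ast y.

Lemma perm4 (N a b c : nat) : (3 < N)%N ->
  perm_eq [:: N; a; b; c] [:: 3; 3; 3; N]%N -> [/\ a = 3, b = 3 & c = 3]%N.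
Proof.
move=> hN /permP /(_ (pred1 3%N)) /=.
rewrite (_ : (N == 3) = false); last by apply/eqP => e; rewrite e in hN.
by case: eqP; case: eqP; case: eqP.
Qed.

Lemma perm36 (N a b : nat) : (6 < N)%N ->
  perm_eq [:: N; a; b] [:: 3; 6; N]%N -> (a = 3 /\ b = 6 \/ a = 6 /\ b = 3)%N.
Proof.
move=> hN h.
have := permP h (pred1 3%N); have := permP h (pred1 6%N); rewrite /=.
rewrite (_ : (N == 3) = false); last by apply/eqP => e; rewrite e in hN.
rewrite (_ : (N == 6) = false); last by apply/eqP => e; rewrite e in hN.
by do 2 case: (@eqP _ a); do 2 case: (@eqP _ b) => //; move=> *; subst; auto.
Qed.

Lemma perm35 (N a b : nat) : (6 < N)%N ->
  perm_eq [:: N; a; b] [:: 3; 5; N]%N -> (a = 3 /\ b = 5 \/ a = 5 /\ b = 3)%N.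
Proof.
move=> hN h.
have := permP h (pred1 3%N); have := permP h (pred1 5%N); rewrite /=.
rewrite (_ : (N == 3) = false); last by apply/eqP => e; rewrite e in hN.
rewrite (_ : (N == 5) = false); last by apply/eqP => e; rewrite e in hN.
by do 2 case: (@eqP _ a); do 2 case: (@eqP _ b) => //; move=> *; subst; auto.
Qed.

Lemma rootV x : V x (vertex_of x).
Proof. exact: connect_root. Qed.

Lemma A156_IsA v : v \in A156 s -> IsA v.
Proof.
rewrite inE => /andP[fv hv].
move: fv; rewrite /face_verts => /imsetP[x]; rewrite inE => Sx ev.
have Vvx : V v x by rewrite ev Vsym rootV.
exists x; split => //; split => //.
have pm : forall l, face_vector v == l -> perm_eq [seq flen d | d <- orbit sg x] l.
  move=> l /eqP e; rewrite -e /face_vector.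
  rewrite perm_sym perm_sort perm_sym.
  by apply: perm_map; apply: orbit_conn => //; rewrite Vsym.
have fx : flen x = flen s by apply: flenS.
have szx : forall l, face_vector v == l -> deg x = size l.
  by move=> l0 /pm /perm_size; rewrite size_map size_orbit.
have h7 : 6 < flen s by apply: leq_trans HN.
case/orP: hv => [/orP[]|] h.
- have dx := szx _ h; have pm4 := pm _ h; rewrite orbit4 //= fx in pm4.
  have [a1 a2 a3] := perm4 (leq_trans (isT : 4 <= 7) h7) pm4.
  by left.
- have dx := szx _ h; have pm4 := pm _ h; rewrite orbit3 //= fx in pm4.
  have fl := perm35 h7 pm4.
  by right; split => //; case: fl => -[-> ->]; [left|right]; split => //; left.
- have dx := szx _ h; have pm4 := pm _ h; rewrite orbit3 //= fx in pm4.
  have fl := perm36 h7 pm4.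
  by right; split => //; case: fl => -[-> ->]; [left|right]; split => //; right.
Qed.



Local Open Scope ring_scope.

Lemma K4 x (y0 y1 y2 y3 : D) : uniq [:: y0; y1; y2; y3] ->
  V x y0 -> V x y1 -> V x y2 -> V x y3 ->
  (4 <= deg x)%N /\
  0 < 1 - (deg x)%:R / 2 + (((flen y0)%:R)^-1 + (((flen y1)%:R)^-1 + (((flen y2)%:R)^-1
        + (((flen y3)%:R)^-1 + 0)))) + ((deg x)%:R - 4) / 3 :> rat.
Proof.
move=> u h0 h1 h2 h3.
have sub : {subset [:: y0; y1; y2; y3] <= orbit sg x}.
  by move=> z; rewrite !inE -!fconnect_orbit => /or4P[]/eqP->.
split; first by rewrite /deg -size_orbit (_ : 4%N = size [:: y0; y1; y2; y3]) //; apply: uniq_leq_size.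
by have := Kb u sub; rewrite !big_cons big_nil.
Qed.

Lemma K3 x (y0 y1 y2 : D) : uniq [:: y0; y1; y2] ->
  V x y0 -> V x y1 -> V x y2 ->
  0 < 1 - (deg x)%:R / 2 + (((flen y0)%:R)^-1 + (((flen y1)%:R)^-1 + (((flen y2)%:R)^-1
        + 0))) + ((deg x)%:R - 3) / 3 :> rat.
Proof.
move=> u h0 h1 h2.
have sub : {subset [:: y0; y1; y2] <= orbit sg x}.
  by move=> z; rewrite !inE -!fconnect_orbit => /or3P[]/eqP->.
by have := Kb u sub; rewrite !big_cons big_nil.
Qed.

Lemma natR5 (n : nat) : (4 <= n)%N -> n <> 4%N -> 5 <= (n%:R : rat).
Proof.
move=> h1 h2; rewrite (ler_nat _ 5); rewrite leq_eqVlt in h1.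
by case/orP: h1 => // /eqP e; exfalso; apply: h2.
Qed.

Lemma inv4 x : flen x <> 3%N -> ((flen x)%:R : rat)^-1 <= 1/4.
Proof.
move=> h; rewrite mul1r; apply: invle => //.
by have := flen3 x; rewrite leq_eqVlt => /orP[/eqP e|//]; exfalso; apply: h.
Qed.

Lemma inv3' (n : nat) : n = 3%N -> ((n%:R : rat))^-1 = 1/3.
Proof. by move=> ->; rewrite mul1r. Qed.

Lemma invbig (n : nat) : big n -> ((n%:R : rat))^-1 <= 1/5.
Proof. by case=> ->; rewrite mul1r // lef_pV2 ?posrE // ler_nat. Qed.

Lemma invS x : S x -> ((flen x)%:R : rat)^-1 <= 1/42.
Proof. by move/flenS ->; apply: invN. Qed.

Local Close Scope ring_scope.

Lemma deg4_tri x0 x1 x2 x3 : uniq [:: x0; x1; x2; x3] ->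
  V x0 x1 -> V x0 x2 -> V x0 x3 ->
  flen x1 = 3 -> flen x2 = 3 -> S x3 ->
  deg x0 = 4 /\ flen x0 = 3.
Proof.
move=> u h1 h2 h3 f1 f2 s3.
have [d4 hK] := K4 u (Vrefl x0) h1 h2 h3.
rewrite (inv3' f1) (inv3' f2) in hK.
have i3 := invS s3; have i0 := inv3 x0.
have dd : deg x0 = 4.
  apply/eqP; apply: contraT => /eqP ne.
  have := natR5 d4 ne; move=> h5; exfalso.
  move: hK i3 i0 h5.
  by clear; move=> *; lra.
split => //; apply/eqP; apply: contraT => /eqP ne.
have i4 := inv4 ne.
move: hK; rewrite dd => hK; exfalso.
move: hK i3 i4.
by clear; move=> *; lra.
Qed.

Lemma SsgA x : S (al x) = S (sg x). Proof. exact: SA. Qed.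

Lemma flenA' x : flen (sg x) = flen (al x). Proof. by rewrite flenA. Qed.

Lemma sg_neq3 x : S x -> ~~ S (sg (sg x)).
Proof. by move=> Sx; apply/negP => h; apply: (@sg2 x); apply: U1 => //; rewrite Vsgl Vsgl Vrefl. Qed.

Lemma uniq4_of (a b c d : D) : a <> b -> a <> c -> a <> d -> b <> c -> b <> d -> c <> d ->
  uniq [:: a; b; c; d].
Proof.
move=> h1 h2 h3 h4 h5 h6; rewrite /= !inE !negb_or.
by do ! (apply/andP; split); try done; apply/eqP.
Qed.

Lemma uniq3_of (a b c : D) : a <> b -> a <> c -> b <> c -> uniq [:: a; b; c].
Proof.
move=> h1 h2 h4; rewrite /= !inE !negb_or.
by do ! (apply/andP; split); try done; apply/eqP.
Qed.

Lemma uniq4 x : ~~ S x -> S (sg (sg (sg x))) -> uniq [:: x; sg x; sg (sg x); sg (sg (sg x))].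
Proof.
move=> nS S3; apply: uniq4_of.
- by move=> e; exact: sg1 (esym e).
- by move=> e; exact: sg2 (esym e).
- by move=> e; move: S3; rewrite -e (negbTE nS).
- by move=> e; exact: sg1 (esym e).
- by move=> e; exact: sg2 (esym e).
- by move=> e; exact: sg1 (esym e).
Qed.

Lemma Vsgn x : V x (sg (sg x)) /\ V x (sg (sg (sg x))).
Proof. by rewrite !Vsg Vrefl. Qed.

Definition RY sx := sg (sg (sg (al (sg sx)))).

Definition Rst sx := [/\ S sx, flen (sg sx) = 3, S (RY sx) & flen (sg (sg (al (sg sx)))) = 3].

Lemma Rpre sx : Rst sx ->
  [/\ deg (al (sg sx)) = 4, flen (al (sg sx)) = 3 & sg (al (sg (sg sx))) = al (RY sx)].
Proof.
case=> Ssx fc Ssy fa2.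
rewrite /RY in Ssy *.
set c := sg sx in fc fa2 Ssy *; set a := al c in fa2 Ssy *.
have nSa : ~~ S a by rewrite /a SsgA /c; apply: sg_neq3.
have u := uniq4 nSa Ssy.
have fa1 : flen (sg a) = 3 by rewrite flenA' /a alphaK.
have [V2 V3] := Vsgn a.
have [d4 f3] := deg4_tri u (Vs1 a) V2 V3 fa1 fa2 Ssy.
split => //.
have e4 := sg4 d4.
have t := tri f3.
have e1 : ph a = sg c by rewrite /phi /a alphaK.
rewrite e1 /phi -[X in _ = X]e4 in t.
move/sg_inj: t => t.
by rewrite -t alphaK.
Qed.

Lemma Rbase sx : Rst sx -> RY sx = sx \/ ph (RY sx) = sx -> False.
Proof.
move=> R; have [d4 f3 T1] := Rpre R; case: R => Ssx fc Ssy fa2.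
case=> h.
- have h1 : V (al (sg sx)) (RY sx) by rewrite /RY !Vsg Vrefl.
  rewrite h in h1.
  have : V (sg sx) (al (sg sx)) by rewrite Vsym Vsg.
  by rewrite (negbTE (noloop _)).
- have h2 : V (al (sg (sg sx))) (ph (RY sx)) by rewrite /phi -T1 !Vsg Vrefl.
  rewrite h in h2.
  have : V (sg (sg sx)) (al (sg (sg sx))).
    by rewrite Vsym; apply: Vtr h2 _; rewrite !Vsg Vrefl.
  by rewrite (negbTE (noloop _)).
Qed.

Lemma Vsame x y z : V x y -> V x z -> V y z.
Proof. by move=> h1 h2; apply: Vtr h2; rewrite Vsym. Qed.

Lemma Rstep sx : Rst sx -> exists sx', [/\ Rst sx', ph sx' = sx & RY sx' = ph (RY sx)].
Proof.
move=> R; have [d4 f3 T1] := Rpre R; case: R => Ssx fc Ssy fa2.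
rewrite /RY in Ssy T1 *.
set c := sg sx in fc fa2 Ssy T1 f3 d4 *.
set y := sg (sg (sg (al c))) in Ssy T1 *.
have Vc : forall k, V sx (iter k sg sx) by move=> k; apply: fconnect_iter.
case: (eqVneq (sg (sg c)) sx) => [e|ne].
  exfalso.
  have S1 : S (al (sg c)) by rewrite SsgA e.
  have S2 : S (sg (al y)) by rewrite -/(ph y) Sph.
  have VV : V (al (sg c)) (sg (al y)) by rewrite -T1 !Vsg Vrefl.
  have := U1 VV S1 S2; rewrite -T1 => h.
  exact: sg2 (esym h).
have u : uniq [:: sg (sg c); c; sg c; sx].
  apply: uniq4_of.
  - by move=> h; exact: sg2 h.
  - by move=> h; exact: sg1 h.
  - by apply/eqP.
  - by move=> h; exact: sg1 (esym h).
  - by move=> h; exact: sg1 h.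
  - by move=> h; exact: sg2 h.
have fsc : flen (sg c) = 3 by rewrite flenA' f3.
have [d4' f4] := deg4_tri u (Vsame (Vc 3) (Vc 1)) (Vsame (Vc 3) (Vc 2))
                           (Vsame (Vc 3) (Vc 0)) fc fsc Ssx.
have dsx : deg sx = 4 by rewrite (degV (Vc 3)).
have e3 : sg (sg (sg c)) = sx by rewrite /c; apply: sg4.
have t := tri f4.
rewrite /phi in t; move/sg_inj: t => t.
have t2 := congr1 al t; rewrite alphaK in t2.
have ey : sg y = al c by rewrite /y sg4.
exists (al (sg (sg c))); split.
- split.
  + by rewrite SsgA e3.
  + by rewrite flenA' alphaK.
  + by rewrite /RY t2 T1 -/(ph y) Sph.
  + by rewrite t2 T1 flenA ey.
- by rewrite /phi alphaK.
- by rewrite /RY t2 T1.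
Qed.

Lemma descR k : forall sx, Rst sx -> iter k ph (RY sx) = sx -> False.
Proof.
elim/ltn_ind: k => -[|[|k]] IH sx R h.
- by apply: (Rbase R); left.
- by apply: (Rbase R); right.
- have [sx' [R' e1 e2]] := Rstep R.
  apply: (IH k _ sx' R') => //.
  apply: ph_inj; rewrite e1 -h -iterS e2 -iterSr.
  done.
Qed.


Definition LY sx := sg (sg (al (sg (sg sx)))).

Definition Lst sx := [/\ S sx, flen (sg sx) = 3, flen (sg (sg sx)) = 3 & S (LY sx)].

Lemma Lpre sx : Lst sx ->
  [/\ sg (sg (sg (sg sx))) = sx, deg (al (sg (sg sx))) = 4, flen (al (sg (sg sx))) = 3,
      flen (sg (sg (sg (al (sg (sg sx)))))) = 3 &
      al (sg (al (sg (sg (sg sx))))) = sg (sg (sg (al (sg (sg sx)))))].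
Proof.
case=> Ssx f1 f2 Ssy; rewrite /LY in Ssy *.
set c := sg (sg sx) in f2 Ssy *; set a := al c in Ssy *.
have Vc : forall k, V sx (iter k sg sx) by move=> k; apply: fconnect_iter.
case: (eqVneq (sg c) sx) => [e|ne].
  exfalso.
  have Sa : S a by rewrite /a SsgA e.
  have := U1 (_ : V a (sg (sg a))) Sa Ssy; rewrite !Vsg Vrefl => /(_ isT) h.
  exact: sg2 (esym h).
have u : uniq [:: sg c; sg sx; c; sx].
  apply: uniq4_of.
  - by move=> h; exact: sg2 (sg_inj h).
  - by move=> h; exact: sg1 (sg_inj h).
  - by apply/eqP.
  - by move=> h; exact: sg1 (esym h).
  - by move=> h; exact: sg1 h.
  - by move=> h; exact: sg2 h.
have [dx fsc] := deg4_tri u (Vsame (Vc 3) (Vc 1)) (Vsame (Vc 3) (Vc 2))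
                           (Vsame (Vc 3) (Vc 0)) f1 f2 Ssx.
have dsx : deg sx = 4 by rewrite (degV (Vc 3)).
have e4 : sg (sg c) = sx by rewrite /c; apply: sg4.
have fa : flen a = 3 by rewrite /a flenA fsc.
have t := tri fa.
have e1 : ph a = sg c by rewrite /phi /a alphaK.
rewrite e1 /phi in t.
have fsa : flen (sg a) = 3 by rewrite flenA' /a alphaK.
case: (eqVneq (sg (sg (sg a))) a) => [e3|ne3].
  exfalso.
  rewrite -[X in _ = X]e3 in t; move/sg_inj: t => t.
  have t2 := congr1 al t; rewrite alphaK in t2.
  have S1 : S (al (sg c)) by rewrite SsgA e4.
  have S2 : S (sg (al (sg (sg a)))) by rewrite -/(ph (sg (sg a))) Sph.
  rewrite -t2 in S2.
  have := U1 (_ : V (al (sg c)) (sg (sg (al (sg c))))) S1 S2.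
  rewrite !Vsg Vrefl => /(_ isT) h; exact: sg2 (esym h).
have u2 : uniq [:: sg (sg (sg a)); a; sg a; sg (sg a)].
  apply: uniq4_of.
  - by apply/eqP.
  - by move=> h; exact: sg2 (sg_inj h).
  - by move=> h; exact: sg1 (sg_inj (sg_inj h)).
  - by move=> h; exact: sg1 (esym h).
  - by move=> h; exact: sg2 (esym h).
  - by move=> h; exact: sg1 (esym h).
have Va : forall k, V a (iter k sg a) by move=> k; apply: fconnect_iter.
have [da f3] := deg4_tri u2 (Vsame (Va 3) (Va 0)) (Vsame (Va 3) (Va 1))
                           (Vsame (Va 3) (Va 2)) fa fsa Ssy.
have da' : deg a = 4 by rewrite (degV (Va 3)).
split => //.
have e5 : a = sg (sg (sg (sg a))) by rewrite sg4.
rewrite {1}e5 in t.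
by move/sg_inj: t.
Qed.

Lemma Lstep sx : Lst sx -> exists sx', [/\ Lst sx', ph sx' = sx & LY sx' = ph (LY sx)].
Proof.
move=> L; have [e4 da fa f3 T] := Lpre L; case: L => Ssx f1 f2 Ssy.
rewrite /LY in Ssy *.
set c := sg (sg sx) in da fa f3 T Ssy *; set a := al c in da fa f3 T Ssy *.
have ec : sg (sg (sg sx)) = sg c by [].

have T2 := congr1 al T; rewrite alphaK in T2.
have ea4 : sg (sg (sg (sg a))) = a by apply: sg4.
have t := tri f3.
have e1 : ph (sg (sg (sg a))) = sg (al (sg (sg (sg a)))) by [].
rewrite e1 /phi in t.
rewrite -T2 in t.
move/sg_inj: t => t; have t3 := congr1 al t; rewrite alphaK in t3.
exists (al (sg c)); split.
- split.
  + by rewrite SsgA -ec e4.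
  + by rewrite T2 flenA ea4.
  + by rewrite T2 -/(ph (sg (sg (sg a)))) flen_ph.
  + by rewrite /LY t3 -/(ph (sg (sg a))) Sph.
- by rewrite /phi alphaK -ec e4.
- by rewrite /LY t3.
Qed.

Lemma Lbase sx : Lst sx -> LY sx = sx \/ ph (LY sx) = sx -> False.
Proof.
move=> L; have [e4 _ _ _ _] := Lpre L.
have e1 : ph (al (sg (sg (sg sx)))) = sx by rewrite /phi alphaK e4.
case=> h.
- have h1 : V (al (sg (sg sx))) (LY sx) by rewrite /LY !Vsg Vrefl.
  rewrite h in h1.
  have : V (sg (sg sx)) (al (sg (sg sx))) by rewrite Vsym; apply: Vtr h1 _; rewrite !Vsg Vrefl.
  by rewrite (negbTE (noloop _)).
- have h' : ph (LY sx) = ph (al (sg (sg (sg sx)))) by rewrite e1.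
  move/ph_inj: h' => {}h.
  have h2 : V (al (sg (sg sx))) (al (sg (sg (sg sx)))) by rewrite -h /LY !Vsg Vrefl.
  have := nm (Vs1 (sg (sg sx))) h2 => h3.
  exact: sg1 (esym h3).
Qed.

Lemma descL k : forall sx, Lst sx -> iter k ph (LY sx) = sx -> False.
Proof.
elim/ltn_ind: k => -[|[|k]] IH sx L h.
- by apply: (Lbase L); left.
- by apply: (Lbase L); right.
- have [sx' [L' e1 e2]] := Lstep L.
  apply: (IH k _ sx' L') => //.
  apply: ph_inj; rewrite e1 -h -iterS e2 -iterSr.
  done.
Qed.

Lemma Sk x y : S x -> S y -> exists k, iter k ph x = y.
Proof.
move=> Sx Sy; exists (findex ph x y); apply: iter_findex.
by apply: Ftr Sy; rewrite Fsym.
Qed.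

Lemma alsw x y : al x = y -> x = al y.
Proof. by move<-; rewrite alphaK. Qed.

Lemma big3 : ~ big 3. Proof. by case. Qed.

Lemma AstP d : Ast d -> flen (sg d) = 3 -> flen (sg (sg d)) = 3 ->
  deg d = 4 /\ flen (sg (sg (sg d))) = 3.
Proof.
case=> _ [[d4 [_ [_ f3]]]|[_ [[_ b]|[b _]]]] h1 h2 //.
- by rewrite h2 in b; case: big3.
- by rewrite h1 in b; case: big3.
Qed.

Lemma flenSN x : S x -> flen x <> 3.
Proof. by move/flenS => ->; move=> e; move: HN; rewrite e. Qed.

Lemma phE x : ph x = sg (al x). Proof. by []. Qed.

Lemma triE x : flen x = 3 -> sg (al (sg (al (sg (al x))))) = x.
Proof. by move/tri. Qed.

Lemma caseB t0 d e : flen t0 = 3 -> sg d = t0 -> S d -> sg (ph t0) = e -> S e -> False.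
Proof.
move=> f0 ed Sd ee Se.
have t := tri f0.
set t1 := ph t0 in ee t; set t2 := ph t1 in t.
have h1 : al t2 = d by apply: sg_inj; rewrite ed -t.
have S1 : S (sg t2) by rewrite -SsgA h1.
have S2 : S (al t1) by rewrite SsgA ee.
have V12 : V (al t1) (sg t2) by rewrite /t2 phE !Vsg Vrefl.
have := U1 V12 S2 S1; rewrite /t2 phE => h.
exact: sg2 (esym h).
Qed.

Lemma flenal x : flen (al x) = flen (sg x). Proof. exact: flenA. Qed.

Lemma triA t0 e : flen (al t0) = 3 -> al t0 = sg e -> sg (al (sg t0)) = al e.
Proof.
move=> f h; have t := triE f.
rewrite alphaK in t. rewrite h in t.
move/sg_inj: t => t; have t2 := congr1 al t; rewrite alphaK in t2.
done.
Qed.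

Lemma caseE t0 d e : flen t0 = 3 -> deg d = 4 -> sg (sg d) = t0 -> S d ->
  flen (sg (sg (sg d))) = 3 -> al t0 = sg e -> S e -> False.
Proof.
move=> f0 d4 ed Sd f3 ee Se.
have e2 : sg (sg t0) = d by rewrite -ed sg4.
have S1 : S (al (sg t0)) by rewrite SsgA e2.
have fa : flen (al t0) = 3 by rewrite flenal -ed.
have T := triA fa ee.
have S2 : S (sg (al e)) by rewrite -phE Sph.
have V12 : V (al (sg t0)) (sg (al e)) by rewrite -T !Vsg Vrefl.
have := U1 V12 S1 S2; rewrite -T => h.
exact: sg2 (esym h).
Qed.

Lemma caseC t0 d e : flen t0 = 3 -> sg d = t0 -> Ast d -> deg e = 4 -> al t0 = sg e -> S e ->
  flen (sg e) = 3 -> False.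
Proof.
move=> f0 ed Ad d4e ee Se fse.
have Sd := proj1 Ad.
have fst0 : flen (sg t0) = 3 by rewrite -flenal ee.
have [d4 f3] : deg d = 4 /\ flen (sg (sg (sg d))) = 3 by apply: AstP; rewrite // ed.
rewrite ed in f3.
have e3 : sg (sg (sg t0)) = d by rewrite -ed sg4.
have fa : flen (al t0) = 3 by rewrite ee.
have TA := triA fa ee.
pose sx := al (sg (sg t0)).
have R : Rst sx.
  have t := triE f3.
  rewrite -/sx in t; move/sg_inj: t => t; have t2 := congr1 al t; rewrite alphaK in t2.
  split.
  - by rewrite /sx SsgA e3.
  - by rewrite flenA' /sx alphaK.
  - by rewrite /RY t2 TA -phE Sph.
  - by rewrite t2 TA flenal -ee.
have [Ssx _ Ssy _] := R.
have [k hk] := Sk Ssy Ssx.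
exact: descR R hk.
Qed.

Lemma caseD t0 d e : flen t0 = 3 -> deg d = 4 -> sg (sg d) = t0 -> S d ->
  flen (sg (sg (sg d))) = 3 -> sg (ph t0) = e -> Ast e -> False.
Proof.
move=> f0 d4 ed Sd f3 ee Ae.
have Se := proj1 Ae.
have e2 : sg (sg t0) = d by rewrite -ed sg4.
have fa : flen (al t0) = 3 by rewrite flenal -ed.
set t1 := ph t0 in ee.
have f1 : flen t1 = 3 by rewrite /t1 flen_ph.
have [d4e f3e] : deg e = 4 /\ flen (sg (sg (sg e))) = 3.
  case: Ae => _ [[h [h1 [h2 h3]]]|[h3 hh]]; first by [].
  exfalso.
  have e3 := sg3 h3.
  have et1 : t1 = sg (sg e) by apply: sg_inj; rewrite ee.
  have ea : al t0 = sg e by apply: sg_inj; rewrite -phE -/t1 et1.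
  by case: hh => -[b1 b2]; [rewrite -et1 f1 in b2 | rewrite -ea fa in b1]; case: big3.
have et1 : t1 = sg (sg (sg e)) by apply: sg_inj; rewrite ee sg4.
have ea : al t0 = sg (sg e) by apply: sg_inj; rewrite -phE -/t1 et1.
pose sx := al (sg t0).
have L : Lst sx.
  have t := triE fa; rewrite alphaK -/sx ea in t.
  move/sg_inj: t => t; have t2 := congr1 al t; rewrite alphaK in t2.
  have fse : flen (sg e) = 3.
    by case: Ae => _ [[_ [h1 _]]|[h3 _]] //; rewrite d4e in h3.
  have t3 := triE fse.
  rewrite -t2 in t3.
  move/sg_inj: t3 => t3; have t4 := alsw t3.
  split.
  - by rewrite /sx SsgA e2.
  - by rewrite t2 flenal -ea fa.
  - by rewrite t2 -phE flen_ph.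
  - by rewrite /LY t4 -phE Sph.
have [Ssx _ _ Ssy] := L.
have [k hk] := Sk Ssy Ssx.
exact: descL L hk.
Qed.

Lemma A1 t0 : flen t0 = 3 -> IsA t0 -> IsA (ph t0) -> S (sg t0).
Proof.
move=> f0 [d [Vd Ad]] [e [Ve Ae]].
case: (boolP (S (sg t0))) => // nS; exfalso.
have nSa : ~~ S (al t0) by rewrite SsgA.
have Sd := proj1 Ad; have Se := proj1 Ae.
have f1 : flen (ph t0) = 3 by rewrite flen_ph.
have hd : sg d = t0 \/ (deg d = 4 /\ flen (sg (sg (sg d))) = 3 /\ sg (sg d) = t0).
  move: Vd; rewrite Vsym; case: Ad => _ [[d4 [_ [_ f3]]]|[d3 _]].
  - case/(pos4 d4) => h.
    + by move: f0; rewrite h; move/flenSN: Sd.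
    + by left.
    + by right.
    + by move: nS; rewrite h sg4 // Sd.
  - case/(pos3 d3) => h.
    + by move: f0; rewrite h; move/flenSN: Sd.
    + by left.
    + by move: nS; rewrite h sg3 // Sd.
have he : sg (ph t0) = e \/ (deg e = 4 /\ flen (sg e) = 3 /\ al t0 = sg e).
  have Va : V e (al t0) by rewrite Vsym -(Vsgl (al t0)) -phE.
  case: Ae => _ [[d4 [f1e _]]|[d3 _]].
  - case/(pos4 d4): Va => h.
    + by move: nSa; rewrite h Se.
    + by right.
    + by left; rewrite phE h sg4.
    + by move: f1; rewrite phE h sg4; move/flenSN: Se.
  - case/(pos3 d3): Va => h.
    + by move: nSa; rewrite h Se.
    + by left; rewrite phE h sg3.
    + by move: f1; rewrite phE h sg3; move/flenSN: Se.
case: hd => [hd|[d4 [f3 hd]]]; case: he => [he|[e4 [f1e he]]].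
- exact: caseB f0 hd Sd he Se.
- exact: caseC f0 hd Ad e4 he Se f1e.
- exact: caseD f0 d4 hd Sd f3 he Ae.
- exact: caseE f0 d4 hd Sd f3 he Se.
Qed.

Lemma A2 t0 : flen t0 = 3 -> IsA t0 -> IsA (ph t0) -> forall y, V (ph (ph t0)) y -> ~~ S y.
Proof.
move=> f0 IA0 IA1 y Vy; apply/negP => Sy.
have St := A1 f0 IA0 IA1.
case: IA0 => d [Vd Ad]; case: IA1 => e [Ve Ae].
have ed : sg t0 = d by apply: U1 => //; [rewrite Vsgl | exact: proj1 Ad].
have Sa : S (al t0) by rewrite SsgA.
have ee : al t0 = e.
  by apply: U1 => //; [rewrite -(Vsgl (al t0)) -phE | exact: proj1 Ae].
subst d e.
set t1 := ph t0 in Vy.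
have et1 : t1 = sg (al t0) by [].
set t2 := ph t1 in Vy.
have t := tri f0; rewrite -/t1 -/t2 in t.
have f1 : flen t1 = 3 by rewrite /t1 flen_ph.
have ft2 : flen t2 = 3 by rewrite /t2 flen_ph.
have st2 : sg (al t1) = t2 by [].
have hf1 : (deg (al t0) = 4 /\ flen (sg (sg (sg (al t0)))) = 3 /\ flen (al t1) = 3)
           \/ big (flen (al t1)).
  rewrite flenal et1.
  case: Ae => _ [[d4 [_ [h2 h3]]]|[d3 [[_ b]|[b _]]]].
  - by left.
  - by right.
  - by rewrite -et1 f1 in b; case: big3.
have ny1 : y <> al t1.
  move=> h; case: hf1 => [[_ [_ h3]]|b]; first by move: h3; rewrite -h; apply: flenSN.
  by move: b; rewrite -h (flenS Sy); case=> e; move: HN; rewrite e.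
have ny2 : y <> t2 by move=> h; move: ft2; rewrite -h; apply: flenSN.
have ny3 : y <> sg t2.
  move=> h; have S2 : S (al t2) by rewrite SsgA -h.
  have V2 : V (al t2) (sg t0) by rewrite -t phE Vsg Vsg Vrefl.
  have := U1 V2 S2 St => h2.
  have h3 : sg (sg t0) = t0 by rewrite -h2 -phE.
  exact: sg2 h3.
have u : uniq [:: al t1; t2; sg t2; y].
  apply: uniq4_of.
  - by move=> h; exact: sg1 (etrans st2 (esym h)).
  - by move=> h; exact: sg2 (etrans (congr1 sg st2) (esym h)).
  - by move=> h; exact: ny1 (esym h).
  - by move=> h; exact: sg1 (esym h).
  - by move=> h; exact: ny2 (esym h).
  - by move=> h; exact: ny3 (esym h).
have Vt2 : V (al t1) t2 by rewrite -st2 Vs1.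
have [d4 hK] := K4 u (Vrefl _) Vt2 (Vtr Vt2 (Vs1 t2)) (Vtr Vt2 Vy).
rewrite (inv3' ft2) in hK.
have iy := invS Sy; have i2 := inv3 (sg t2); have i1 := inv3 (al t1).
have dd : deg (al t1) = 4.
  apply/eqP; apply: contraT => /eqP ne; exfalso.
  have h5 := natR5 d4 ne.
  by move: hK iy i2 i1 h5; clear; move=> *; lra.
case: hf1 => [[d4e [f3e fa1]]|b]; last first.
  exfalso; have ib := invbig b; rewrite dd in hK.
  by move: hK iy i2 ib; clear; move=> *; lra.
have dt2 : deg t2 = 4 by rewrite -(degV Vt2).
have e3 : sg (sg (sg t2)) = al t1 by apply: sg_inj; rewrite sg4.
have ey : y = sg (sg t2).
  case/(pos4 dt2): Vy => h.
  - exact: False_ind (ny2 h).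
  - exact: False_ind (ny3 h).
  - exact: h.
  - by rewrite e3 in h.
have esy : sg y = al t1 by rewrite ey e3.
have et1' : t1 = sg (al t0) by [].
have f2t1 : flen (sg (sg t1)) = 3 by rewrite et1'.
pose sx := al (sg (sg t1)).
have T1 : sg (al (sg sx)) = al (sg t1).
  have tt := triE f2t1; rewrite -/sx in tt.
  by move/sg_inj: tt => tt; apply: alsw.
have T2 : sg (al (sg t1)) = al y by apply: triA => //; rewrite esy.
have R : Rst sx.
  split.
  - by rewrite /sx SsgA et1' sg4.
  - by rewrite flenA' /sx alphaK.
  - by rewrite /RY T1 T2 -phE Sph.
  - by rewrite T1 T2 flenal esy.
have [Ssx _ Ssy _] := R.
have [k' hk'] := Sk Ssy Ssx.
exact: descR R hk'.
Qed.

Lemma TriAst t0 : flen t0 = 3 -> IsA t0 -> IsA (ph t0) ->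
  [/\ Ast (sg t0), Ast (al t0), S (sg t0) & S (al t0)].
Proof.
move=> f0 IA0 IA1.
have St := A1 f0 IA0 IA1.
have Sa : S (al t0) by rewrite SsgA.
case: IA0 => d [Vd Ad]; case: IA1 => e [Ve Ae].
have ed : sg t0 = d by apply: U1 => //; [rewrite Vsgl | exact: proj1 Ad].
have ee : al t0 = e.
  by apply: U1 => //; [rewrite -(Vsgl (al t0)) -phE | exact: proj1 Ae].
by subst.
Qed.

Lemma TriF t0 : flen t0 = 3 -> Ast (al t0) ->
  (deg (al t0) = 4 /\ flen (sg (sg (sg (al t0)))) = 3 /\ flen (al (ph t0)) = 3)
  \/ big (flen (al (ph t0))).
Proof.
move=> f0 Ae.
have f1 : flen (ph t0) = 3 by rewrite flen_ph.
rewrite flenal phE.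
case: Ae => _ [[d4 [_ [h2 h3]]]|[d3 [[_ b]|[b _]]]].
- by left.
- by right.
- by rewrite -phE f1 in b; case: big3.
Qed.

Lemma Adj t0 t0' : flen t0 = 3 -> Ast (sg t0) -> S (al t0') ->
  flen t0' = 3 -> sg (ph (ph t0)) = ph (ph t0') -> False.
Proof.
move=> f0 Ad Se f0' h.
have t := tri f0.
have h1 : al (ph t0') = ph (ph t0) by apply: sg_inj; rewrite -phE h.
have h2 := alsw h1.
have V1 : V (al t0') (sg t0).
  apply: (@Vtr _ (ph t0')); first by rewrite phE Vs1.
  by rewrite h2 -(Vsgl (al _)) -phE t Vs1.
have e1 := U1 V1 Se (proj1 Ad).
have e2 : sg (sg t0) = al (ph (ph t0)) by rewrite -e1 -phE.
have e3 : sg (sg (sg t0)) = t0 by rewrite e2 -phE t.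
case: Ad => _ [[d4 _]|[d3 [[b1 b2]|[b1 b2]]]].
- have := sg4 d4; rewrite e3 => h3; exact: sg1 h3.
- by rewrite e3 f0 in b2; case: big3.
- by rewrite e2 -h2 flen_ph f0' in b1; case: big3.
Qed.

Lemma Xlem t0 t0' : flen t0 = 3 -> Ast (sg t0) -> flen t0' = 3 -> Ast (al t0') ->
  sg (ph (ph t0)) = al (ph t0') -> flen (al (ph t0')) = 3 -> False.
Proof.
move=> f0 Ad f0' Ae h fa.
have t := tri f0.
set t2 := ph (ph t0) in h t.
set t1' := ph t0' in h fa.
have st2 : sg (al t2) = t0 by rewrite -phE.
have fat2 : flen (al t2) = 3 by rewrite flenal h.
have f1' : flen t1' = 3 by rewrite /t1' flen_ph.
have [d4 [fd1 [fd2 fd3]]] : deg (sg t0) = 4 /\ flen (sg (sg t0)) = 3 /\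
    flen (sg (sg (sg t0))) = 3 /\ flen (sg (sg (sg (sg t0)))) = 3.
  case: (Ad) => _ [[d4 hh]|[d3 hh]]; first by [].
  exfalso.
  have e3 : sg (sg (sg t0)) = t0 by apply: sg_inj; rewrite sg3.
  have ea : al t2 = sg (sg t0) by apply: sg_inj; rewrite st2.
  by case: hh => -[b1 b2]; [rewrite e3 f0 in b2 | rewrite -ea fat2 in b1]; case: big3.
have e4 : sg (sg (sg (sg t0))) = t0 by apply: sg_inj; rewrite sg4.
have ea : al t2 = sg (sg (sg t0)) by apply: sg_inj; rewrite st2.
have Se := proj1 Ae.
have et1' : t1' = sg (al t0') by [].
have [d4e f3e] : deg (al t0') = 4 /\ flen (sg (sg (sg (al t0')))) = 3.
  by apply: AstP => //; rewrite -flenal -phE.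
have I1 : sg t1' = al (sg (sg t0)).
  have tt := triE fa; rewrite alphaK -h in tt.
  move/sg_inj: tt => tt; have tt2 := alsw tt.
  rewrite ea in tt2; move/sg_inj: tt2 => tt2.
  exact: alsw tt2.
have I2 : sg (al (sg (sg t1'))) = al (sg t0).
  have tt := triE fd1; rewrite -I1 in tt.
  by move/sg_inj: tt => tt; apply: alsw.
have S1 : S (al (sg (sg t1'))) by rewrite SsgA et1' sg4.
have S2 : S (sg (al (sg t0))) by rewrite -phE Sph; exact: proj1 Ad.
have V12 : V (al (sg (sg t1'))) (sg (al (sg t0))) by rewrite -I2 !Vsg Vrefl.
have := U1 V12 S1 S2; rewrite -I2 => hh.
exact: sg2 (esym hh).
Qed.

Lemma deg3_5 x y : V x y -> S x -> flen y = 5 -> deg x = 3.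
Proof.
move=> xy Sx fy.
have nxy : x != y by apply/eqP => e; move: fy; rewrite -e (flenS Sx) => e5; move: HN; rewrite e5.
have u : uniq [:: x; y] by rewrite /= inE nxy.
have sub : {subset [:: x; y] <= orbit sg x}.
  by move=> z; rewrite !inE -!fconnect_orbit => /orP[]/eqP->; rewrite ?Vrefl.
have := Kb u sub; rewrite !big_cons big_nil fy (flenS Sx) /=.
have := invN; have h3 := Hdeg x.
case: (ltngtP (deg x) 3) => [h|h|//].
- by move: h3; rewrite leqNgt h.
- have h4 : ((4%:R : rat) <= (deg x)%:R)%R by rewrite ler_nat.
  by move: h4; clear; move=> *; exfalso; lra.
Qed.

Lemma iter5 x : flen x = 5 -> ph (ph (ph (ph (ph x)))) = x.
Proof. by move=> h; have := iter_order (@ph_inj m) x; rewrite -/(flen x) h. Qed.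

Lemma tri35 x : S x -> flen (sg x) = 5 -> deg x = 3 -> flen (sg (sg x)) = 3.
Proof.
move=> Sx f1 d3.
have u : uniq [:: x; sg x; sg (sg x)].
  apply: uniq3_of.
  - by move=> h; exact: sg1 (esym h).
  - by move=> h; exact: sg2 (esym h).
  - by move=> h; exact: sg1 (esym h).
have := K3 u (Vrefl x) (Vs1 x) (proj1 (Vsgn x)).
rewrite d3 f1 (flenS Sx).
have := invN; have := inv3 (sg (sg x)).
case: (eqVneq (flen (sg (sg x))) 3) => [//|ne].
have := inv4 (elimN eqP ne).
by clear; move=> *; exfalso; lra.
Qed.

Lemma Pent t0 t0' : flen t0 = 3 -> Ast (sg t0) -> flen t0' = 3 -> Ast (al t0') ->
  sg (ph (ph t0)) = al (ph t0') -> flen (al (ph t0')) = 5 -> False.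
Proof.
move=> f0 Ad f0' Ae h fa.
have t := tri f0.
set t2 := ph (ph t0) in h t.
set t1' := ph t0' in h fa.
have st2 : sg (al t2) = t0 by rewrite -phE.
have fat2 : flen (al t2) = 5 by rewrite flenal h.
have Sd := proj1 Ad; have Se := proj1 Ae.
have d3 : deg (sg t0) = 3.
  apply: (deg3_5 _ Sd fat2).
  by rewrite Vsym -(Vsgl (al t2)) st2 Vs1.
have e3 : sg (sg (sg t0)) = t0 by apply: sg_inj; rewrite sg3.
have ea : al t2 = sg (sg t0) by apply: sg_inj; rewrite st2.
have et1' : t1' = sg (al t0') by [].
have fst1 : flen (sg t1') = 5 by rewrite -flenal.
have d3e : deg (al t0') = 3.
  by apply: (deg3_5 _ Se (_ : flen (sg t1') = 5)) => //; rewrite et1' Vsg Vs1.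
have e3e : sg (sg t1') = al t0' by rewrite et1' sg3.
pose sb := al (sg t1').
have Ssb : S sb by rewrite /sb SsgA e3e.
pose g := sg sb.
have fg : flen g = 5 by rewrite /g /sb -phE flen_ph.
have P1 : sg (al g) = al (sg t0).
  have pp := iter5 fat2.
  rewrite [ph (al t2)]phE alphaK h in pp.
  rewrite [ph (al t1')]phE alphaK in pp.
  rewrite [ph (sg t1')]phE -/sb -/g in pp.
  rewrite !phE ea in pp.
  by move/sg_inj: pp => pp; apply: alsw.
have db : deg sb = 3 by apply: (deg3_5 (Vs1 sb) Ssb fg).
have fsg : flen (sg g) = 3 by apply: tri35.
have Sd1 : S (ph (sg t0)) by rewrite Sph.
have fad : flen (al (sg t0)) = 5 by rewrite flenal -ea.
have da : deg (al g) = 3.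
  have d' : deg (ph (sg t0)) = 3.
    by apply: (deg3_5 _ Sd1 fad); rewrite phE Vsgl Vrefl.
  by rewrite -d'; apply: degV; rewrite phE -P1 !Vsg Vrefl.
have e3a : sg (sg (sg (al g))) = al g by apply: sg3.
have fag : flen (al g) = 3 by rewrite flenal.
have I1 : sg (al (sg g)) = al (ph (sg t0)).
  have tt := triE fag; rewrite alphaK in tt.
  rewrite -[X in _ = X]e3a P1 -phE in tt.
  by move/sg_inj: tt => tt; apply: alsw.
have S1 : S (al (sg g)) by rewrite SsgA /g sg3.
have S2 : S (sg (al (ph (sg t0)))) by rewrite -phE !Sph.
have V12 : V (al (sg g)) (sg (al (ph (sg t0)))) by rewrite -I1 !Vsg Vrefl.
have := U1 V12 S1 S2; rewrite -I1 => hh.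
exact: sg2 (esym hh).
Qed.

Lemma pos5 x y : deg x = 5 -> V x y ->
  y = x \/ y = sg x \/ y = sg (sg x) \/ y = sg (sg (sg x)) \/ y = sg (sg (sg (sg x))).
Proof.
move=> h; rewrite fconnect_orbit /orbit -/(deg x) h /= !inE.
by case/orP => [/eqP->|]; [left|case/orP => [/eqP->|]; [right;left|case/orP => [/eqP->|];
  [right;right;left|case/orP => [/eqP->|/eqP->]; [right;right;right;left|right;right;right;right]]]].
Qed.

Lemma sg5 x : deg x = 5 -> sg (sg (sg (sg (sg x)))) = x.
Proof. by move=> h; have := iter_order sg_inj x; rewrite -/(deg x) h. Qed.

Lemma flen356 t0 : flen t0 = 3 -> Ast (al t0) ->
  flen (al (ph t0)) = 3 \/ flen (al (ph t0)) = 5 \/ flen (al (ph t0)) = 6.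
Proof.
move=> f0 Ae; case: (TriF f0 Ae) => [[_ [_ h]]|[h|h]]; by [left | right; left | right; right].
Qed.

Local Open Scope ring_scope.
Lemma inv56 (n : nat) : (n = 5 \/ n = 6)%N -> ((n%:R : rat))^-1 <= 1/5.
Proof. by move=> h; apply: invbig. Qed.
Lemma inv6 (n : nat) : (n = 6)%N -> ((n%:R : rat))^-1 = 1/6.
Proof. by move=> ->; rewrite mul1r. Qed.
Lemma inv5 (n : nat) : (n = 5)%N -> ((n%:R : rat))^-1 = 1/5.
Proof. by move=> ->; rewrite mul1r. Qed.
Lemma ar1 (d a b : rat) : 6 <= d -> a <= 1/3 -> b <= 1/3 ->
  0 < 1 - d/2 + (a + (1/3 + (b + (1/3 + 0)))) + (d-4)/3 -> False.
Proof. move=> *; lra. Qed.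
Lemma ar2 : 0 < 1 - (4%:R : rat)/2 + (1/6 + (1/3 + (1/6 + (1/3 + 0)))) + (4%:R-4)/3 -> False.
Proof. move=> *; lra. Qed.
Lemma ar3 (a : rat) : a <= 1/3 ->
  0 < 1 - (5%:R : rat)/2 + (a + (1/3 + (1/6 + (1/3 + 0)))) + (5%:R-4)/3 -> False.
Proof. move=> *; lra. Qed.
Lemma ar4 (a : rat) : a <= 1/3 ->
  0 < 1 - (5%:R : rat)/2 + (1/6 + (1/3 + (a + (1/3 + 0)))) + (5%:R-4)/3 -> False.
Proof. move=> *; lra. Qed.
Local Close Scope ring_scope.

Lemma C1core t0 t0' : flen t0 = 3 -> IsA t0 -> IsA (ph t0) ->
  flen t0' = 3 -> IsA t0' -> IsA (ph t0') ->
  V (ph (ph t0)) (ph (ph t0')) -> ~~ F t0 t0' -> False.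
Proof.
move=> f0 I0 I1 f0' I0' I1' Vq nF.
have [Ad Ae Sd Se] := TriAst f0 I0 I1.
have [Ad' Ae' Sd' Se'] := TriAst f0' I0' I1'.
have t := tri f0; have t' := tri f0'.
set q1 := ph (ph t0) in Vq t; set q2 := ph (ph t0') in Vq t'.
set p1 := al (ph t0); set p2 := al (ph t0').
have sp1 : sg p1 = q1 by []; have sp2 : sg p2 = q2 by [].
have nq : q1 <> q2.
  move=> e; move: nF; rewrite -t -t' e.
  by rewrite /in_mem /= connect0.
case: (eqVneq (sg q1) q2) => [e|ne1]; first exact: Adj f0 Ad Se' f0' e.
case: (eqVneq (sg q2) q1) => [e|ne2]; first exact: Adj f0' Ad' Se f0 e.
have hf1 := flen356 f0 Ae; have hf2 := flen356 f0' Ae'.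
rewrite -/p1 in hf1; rewrite -/p2 in hf2.
have u : uniq [:: p1; q1; p2; q2].
  apply: uniq4_of.
  - by move=> e; exact: sg1 (etrans sp1 (esym e)).
  - by move=> e; apply: nq; rewrite -sp1 e.
  - by move=> e; move: ne2; rewrite -e sp1 eqxx.
  - by move=> e; move: ne1; rewrite e sp2 eqxx.
  - by [].
  - by move=> e; exact: sg1 (etrans sp2 (esym e)).
have V1 : V q1 p1 by rewrite Vsym -sp1 Vs1.
have V2 : V q1 p2 by apply: Vtr Vq _; rewrite Vsym -sp2 Vs1.
have [d4 hK] := K4 u V1 (Vrefl q1) V2 Vq.
have fq1 : flen q1 = 3 by rewrite /q1 !flen_ph.
have fq2 : flen q2 = 3 by rewrite /q2 !flen_ph.
rewrite (inv3' fq1) (inv3' fq2) in hK.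
have i1 := inv3 p1; have i2 := inv3 p2.
have key : (sg q1 = p2 /\ (flen p2 = 3 \/ flen p2 = 5)) \/
           (sg q2 = p1 /\ (flen p1 = 3 \/ flen p1 = 5)).
  have d45 : deg q1 = 4 \/ deg q1 = 5.
    case: (ltngtP (deg q1) 5) => [h|h|h]; last by right.
    - by left; apply/eqP; rewrite eqn_leq d4 andbT -ltnS.
    - exfalso; have h6 : ((6%:R : rat) <= (deg q1)%:R)%R by rewrite ler_nat.
      exact: ar1 h6 i1 i2 hK.
  case: d45 => dq.
  - have e4 := sg4 dq.
    have ep1 : p1 = sg (sg (sg q1)) by apply: sg_inj; rewrite sp1 e4.
    case/(pos4 dq): (Vq) => h.
    + by exfalso; apply: nq.
    + by move: ne1; rewrite h eqxx.
    + have ep2 : sg q1 = p2 by apply: sg_inj; rewrite sp2.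
      have eq2 : sg q2 = p1 by rewrite h ep1.
      case: hf2 => [h2|[h2|h2]]; first by left; split => //; left.
        by left; split => //; right.
      case: hf1 => [h1|[h1|h1]]; first by right; split => //; left.
        by right; split => //; right.
      exfalso; rewrite (inv6 h1) (inv6 h2) dq in hK.
      exact: ar2 hK.
    + by move: ne2; rewrite h -ep1 sp1 eqxx.
  - have e5 := sg5 dq.
    have ep1 : p1 = sg (sg (sg (sg q1))) by apply: sg_inj; rewrite sp1 e5.
    case/(pos5 dq): (Vq) => [h|[h|[h|[h|h]]]].
    + by exfalso; apply: nq.
    + by move: ne1; rewrite h eqxx.
    + have ep2 : sg q1 = p2 by apply: sg_inj; rewrite sp2.
      case: hf2 => [h2|[h2|h2]]; first by left; split => //; left.
        by left; split => //; right.
      exfalso; rewrite (inv6 h2) dq in hK.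
      exact: ar3 i1 hK.
    + have eq2 : sg q2 = p1 by rewrite h ep1.
      case: hf1 => [h1|[h1|h1]]; first by right; split => //; left.
        by right; split => //; right.
      exfalso; rewrite (inv6 h1) dq in hK.
      exact: ar4 i2 hK.
    + by move: ne2; rewrite h -ep1 sp1 eqxx.
case: key => [[e [h|h]]|[e [h|h]]].
- exact: Xlem f0 Ad f0' Ae' e h.
- exact: Pent f0 Ad f0' Ae' e h.
- exact: Xlem f0' Ad' f0 Ae e h.
- exact: Pent f0' Ad' f0 Ae e h.
Qed.

Lemma symV : connect_sym (frel sg). Proof. by move=> x y; apply: Vsym. Qed.
Lemma symF : connect_sym (frel ph). Proof. by move=> x y; apply: Fsym. Qed.

Lemma rootVE x y : (vertex_of x == vertex_of y) = V x y.
Proof. exact: (root_connect symV). Qed.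

Lemma fvP t v : reflect (exists d, F t d /\ vertex_of d = v) (v \in face_verts t).
Proof.
apply: (iffP idP).
- by case/imsetP => d; rewrite inE => h ->; exists d.
- by case=> d [h <-]; apply/imsetP; exists d; rewrite ?inE.
Qed.

Lemma IsAV x y : V x y -> IsA y -> IsA x.
Proof. by move=> xy [z [yz Az]]; exists z; split => //; apply: Vtr yz. Qed.

Lemma tri_mem t d : flen t = 3 -> F t d -> [\/ d = t, d = ph t | d = ph (ph t)].
Proof.
move=> f3; rewrite fconnect_orbit orbit3 // !inE.
by case/or3P => /eqP->; [apply: Or31|apply: Or32|apply: Or33].
Qed.

Definition Tri t0 := [/\ flen t0 = 3, IsA t0 & IsA (ph t0)].

Lemma Tset_rep t : t \in Tset s -> exists t0, F t t0 /\ Tri t0.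
Proof.
rewrite inE => /andP[_ /andP[/eqP f3 /existsP[v1 /andP[A1' /existsP[v2 /andP[A2' /and3P[n12 h1 h2]]]]]]].
have IA1 := A156_IsA A1'; have IA2 := A156_IsA A2'.
case/fvP: h1 => d1 [F1 r1]; case/fvP: h2 => d2 [F2 r2].
have P1 : IsA d1 by apply: IsAV IA1; rewrite -r1 rootV.
have P2 : IsA d2 by apply: IsAV IA2; rewrite -r2 rootV.
have nd : d1 <> d2 by move=> e; move: n12; rewrite -r1 -r2 e eqxx.
have t3 := tri f3.
have f1 : flen (ph t) = 3 by rewrite flen_ph.
have f2 : flen (ph (ph t)) = 3 by rewrite !flen_ph.
have Ft1 : F t (ph t) by apply: fconnect1.
have Ft2 : F t (ph (ph t)) by rewrite !Fph connect0.
case/(tri_mem f3): F1 => e1; case/(tri_mem f3): F2 => e2; subst d1 d2;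
  try (by exfalso; apply: nd).
- by exists t; split; [exact: connect0 | split].
- by exists (ph (ph t)); split => //; split; rewrite ?t3.
- by exists t; split; [exact: connect0 | split].
- by exists (ph t); split => //; split.
- by exists (ph (ph t)); split => //; split; rewrite ?t3.
- by exists (ph t); split => //; split.
Qed.

Lemma Tri_fv t t0 v : F t t0 -> flen t0 = 3 -> v \in face_verts t ->
  [\/ v = vertex_of t0, v = vertex_of (ph t0) | v = vertex_of (ph (ph t0))].
Proof.
move=> Ft f3 /fvP[d [Fd <-]].
have : F t0 d by apply: Ftr Fd; rewrite Fsym.
by case/(tri_mem f3) => ->; [apply: Or31|apply: Or32|apply: Or33].
Qed.

Lemma IsA_fv x : IsA x -> vertex_of x \in face_verts s.
Proof.
case=> y [xy [Sy _]]; apply/fvP; exists y; split => //.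
by apply/eqP; rewrite rootVE Vsym.
Qed.

Lemma third_not x : Tri x -> vertex_of (ph (ph x)) \notin face_verts s.
Proof.
case=> f3 I0 I1; apply/negP => /fvP[d [Sd e]].
have : V (ph (ph x)) d by rewrite -rootVE e.
by move/(A2 f3 I0 I1); rewrite Sd.
Qed.

Lemma fv_mem t x : F t x -> vertex_of x \in face_verts t.
Proof. by move=> h; apply/fvP; exists x. Qed.

Lemma claim2 t : t \in Tset s -> #|face_verts t :&: C1 s| = 1.
Proof.
move=> tT; have [t0 [Ft [f3 I0 I1]]] := Tset_rep tT.
have T0 : Tri t0 by split.
rewrite (_ : face_verts t :&: C1 s = [set vertex_of (ph (ph t0))]) ?cards1 //.
apply/setP => v; rewrite !inE.
apply/andP/eqP => [[hv hC]|->].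
- move: hC => /andP[_ /andP[nv _]].
  by case: (Tri_fv Ft f3 hv) => e; move: nv; rewrite e ?(IsA_fv I0) ?(IsA_fv I1) ?eqxx.
- have hv : vertex_of (ph (ph t0)) \in face_verts t.
    by apply: fv_mem; apply: Ftr Ft _; rewrite !Fph connect0.
  split => //; apply/and3P; split.
  + exact: (roots_root symV).
  + exact: third_not.
  + by apply/existsP; exists t; rewrite tT.
Qed.

Lemma faces_eq (t t' : D) : t \in faces m -> t' \in faces m -> F t t' -> t = t'.
Proof.
rewrite !inE => /eqP r1 /eqP r2 h.
by rewrite -r1 -r2; apply/eqP; rewrite (root_connect symF).
Qed.

Lemma claim1 v : v \in C1 s -> #|[set t in Tset s | v \in face_verts t]| = 1.
Proof.
rewrite inE => /and3P[_ nv /existsP[t /andP[tT vt]]].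
rewrite (_ : [set t in Tset s | v \in face_verts t] = [set t]) ?cards1 //.
apply/setP => t'; rewrite in_set1 in_set.
apply/andP/eqP => [[tT' vt']|->]; last by split.
have [t0 [Ft [f3 I0 I1]]] := Tset_rep tT.
have [t0' [Ft' [f3' I0' I1']]] := Tset_rep tT'.
have ev : v = vertex_of (ph (ph t0)).
  by case: (Tri_fv Ft f3 vt) => // e; move: nv; rewrite e ?(IsA_fv I0) ?(IsA_fv I1).
have ev' : v = vertex_of (ph (ph t0')).
  by case: (Tri_fv Ft' f3' vt') => // e; move: nv; rewrite e ?(IsA_fv I0') ?(IsA_fv I1').
have Vq : V (ph (ph t0')) (ph (ph t0)) by rewrite -rootVE -ev -ev'.
case: (boolP (F t0' t0)) => h.
- apply: faces_eq.
  + by move: tT'; rewrite inE => /andP[].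
  + by move: tT; rewrite inE => /andP[].
  + by apply: Ftr Ft' (Ftr h _); rewrite Fsym.
- by exfalso; apply: (C1core f3' I0' I1' f3 I0 I1 Vq h).
Qed.

End Main.

Theorem lemma13p2 (m : rotmap) (s : dart m) :
  planar_PCC m -> (42 <= flen s)%N ->
  (forall v, v \in C1 s -> #|[set t in Tset s | v \in face_verts t]| = 1%N) /\
  (forall t, t \in Tset s -> #|face_verts t :&: C1 s| = 1%N).
Proof.
move=> [[_ Hlp Hmu _] Hpos Hdeg _ _] HN.
split => [v|t].
- exact: (claim1 Hlp Hmu Hdeg Hpos HN).
- exact: (claim2 Hlp Hmu Hdeg Hpos HN).
Qed.
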